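(* Consider the auxiliary dynamics defined by the sets $\mathcal A^\alpha$, $\mathcal A^\alpha_i$ below, on the torus $\mathbb Z^d/L\mathbb Z^d$ for $L$ large. Then for every configuration $\eta$ and every $\alpha\in\{1,\dots,d\}$ the total current in direction $\alpha$ vanishes: $$\sum_{x}c^{\mathrm{aux}}_{x,x+e_\alpha}(\eta)\big(\eta(x)-\eta(x+e_\alpha)\big)=0.$$
   Context: For each $\alpha\in\{1,\dots,d\}$ let $\mathcal A^\alpha=\{x^\alpha_1,\dots,x^\alpha_{n_\alpha}\}\subset\mathbb Z^d$ be a finite set of distinct sites ordered so that $x^\alpha_i\cdot e_\alpha\ge x^\alpha_j\cdot e_\alpha$ whenever $i\le j$ ($e_1,\dots,e_d$ the standard basis), and set $\mathcal A^\alpha_i=\{x^\alpha_j+e_\alpha:1\le j\le i\}\cup\{x^\alpha_j:i+1\le j\le n_\alpha\}$, $0\le i\le n_\alpha$. Configurations are $\eta\in\{0,1\}^{\mathbb Z^d/L\mathbb Z^d}$ ($0$ = empty); sites are taken modulo $L$, with $L$ large enough that all the sets involved are embedded injectively. The auxiliary dynamics exchanges $x+x^\alpha_{i+1}$ and $x+x^\alpha_{i+1}+e_\alpha$ at rate $1$ whenever $x+\mathcal A^\alpha_i$ is empty ($0\le i<n_\alpha$, forward transitions), and exchanges $x+x^\alpha_i$ and $x+x^\alpha_i+e_\alpha$ at rate $1$ whenever $x+\mathcal A^\alpha_i$ is empty ($1\le i\le n_\alpha$, backward transitions). Equivalently, the rate of exchanging $x$ and $x+e_\alpha$ is $c^{\mathrm{aux}}_{x,x+e_\alpha}(\eta)=\#\{i\in\{0,\dots,n_\alpha-1\}:(x-x^\alpha_{i+1}+\mathcal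 A^\alpha_i)\setminus\{x\}\text{ is empty in }\eta\}$ whenever $\eta(x)\ne\eta(x+e_\alpha)$. *)

(* Defs.v *)
From mathcomp Require Import all_boot all_order all_algebra.
Set Implicit Arguments. Unset Strict Implicit. Unset Printing Implicit Defensive.
Import Order.TTheory GRing.Theory Num.Theory.
Local Open Scope ring_scope.

Definition site (d : nat) := {ffun 'I_d -> int}.

Definition vadd d (u v : site d) : site d := [ffun k => u k + v k].
Definition vsub d (u v : site d) : site d := [ffun k => u k - v k].
Definition ebasis d (a : 'I_d) : site d := [ffun k => ((k == a) : nat)%:Z].
Definition escale d (m : int) (a : 'I_d) : site d := [ffun k => m * ((k == a) : nat)%:Z].

(* Configurations on the torus Z^d / L Z^d, represented as L-periodic
   functions Z^d -> {0,1} (true = occupied, false = empty). *)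
Definition periodic d (L : nat) (eta : site d -> bool) : Prop :=
  forall (x : site d) (k : 'I_d), eta (vadd x (escale (L%:Z) k)) = eta x.

(* Given the list Aa = [x_1; ...; x_n] (x_j = nth 0 Aa (j-1)),
   A_i = {x_j + e_a : j <= i} U {x_j : j > i}. *)
Definition Aset d (a : 'I_d) (Aa : seq (site d)) (i : nat) : seq (site d) :=
  map (fun y => vadd y (ebasis a)) (take i Aa) ++ drop i Aa.

Definition empty_except d (eta : site d -> bool) (S : seq (site d)) (x : site d) : bool :=
  all (fun y => (y != x) ==> ~~ eta y) S.

(* c^aux_{x,x+e_a}(eta) = #{ i in {0..n-1} : (x - x_{i+1} + A_i) \ {x} is empty } *)
Definition caux d (a : 'I_d) (Aa : seq (site d)) (eta : site d -> bool) (x : site d) : nat :=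
  count (fun i => empty_except eta
                    (map (fun y => vadd (vsub x (nth 0 Aa i)) y) (Aset a Aa i)) x)
        (iota 0 (size Aa)).

Definition lift d L (x : {ffun 'I_d -> 'I_L}) : site d := [ffun k => ((x k : nat))%:Z].

Definition current d (L : nat) (a : 'I_d) (Aa : seq (site d)) (eta : site d -> bool) : int :=
  \sum_(x : {ffun 'I_d -> 'I_L})
     (caux a Aa eta (lift x))%:Z *
     (((eta (lift x)) : nat)%:Z - ((eta (vadd (lift x) (ebasis a))) : nat)%:Z).

(* Main.v *)
Require Import Defs.
From mathcomp Require Import all_boot all_order all_algebra.
From mathcomp Require Import ring zify.
Import Order.TTheory GRing.Theory Num.Theory.
Local Open Scope ring_scope.

Section Per.
Variable d : nat.
Variable L : nat.
Variable R : Type.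
Variable F : site d -> R.
Hypothesis HF : forall (x : site d) (k : 'I_d), F (vadd x (escale (L%:Z) k)) = F x.

Lemma per_shift_nat (n : nat) z k : F (vadd z (escale (n%:Z * L%:Z) k)) = F z.
Proof.
elim: n z => [|n IH] z.
  congr F; apply/ffunP => j; rewrite !ffunE; by rewrite !mul0r addr0.
rewrite -(IH z) -(HF (vadd z (escale (n%:Z * L%:Z) k)) k); congr F.
apply/ffunP => j; rewrite !ffunE -[n.+1]addn1 PoszD; ring.
Qed.

Lemma per_shift (m : int) z k : F (vadd z (escale (m * L%:Z) k)) = F z.
Proof.
case: m => n; first exact: per_shift_nat.
rewrite -(per_shift_nat n.+1 (vadd z (escale (Negz n * L%:Z) k)) k).
congr F; apply/ffunP => j; rewrite !ffunE NegzE; ring.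
Qed.

Lemma per_dvd_aux (j : nat) (w : site d) z :
  (forall k : 'I_d, (j <= k)%N -> w k = 0) -> (forall k, (L%:Z %| w k)%Z) ->
  F (vadd z w) = F z.
Proof.
elim: j w z => [|j IH] w z Hw Hd.
  congr F; apply/ffunP => k; rewrite !ffunE Hw // addr0 //.
case: (ltnP j d) => hj; last first.
  apply: IH => // k hk; apply: Hw; have := ltn_ord k; lia.
pose kj := Ordinal hj.
pose w' : site d := [ffun k => if k == kj then 0 else w k].
have -> : vadd z w = vadd (vadd z w') (escale ((w kj %/ L%:Z)%Z * L%:Z) kj).
  apply/ffunP => k; rewrite !ffunE divzK //; case: (eqVneq k kj) => [->|_] /=; ring.
rewrite per_shift IH //.
  move=> k hk; rewrite ffunE; case: (eqVneq k kj) => // hne; apply: Hw.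
  rewrite leq_eqVlt in hk; case/orP: hk => // /eqP E; case/eqP: hne.
  by apply: val_inj => /=; rewrite -E.
move=> k; rewrite ffunE; case: ifP => _ //; exact: dvdz0.
Qed.

Lemma per_cong (z z' : site d) : (forall k, (L%:Z %| z' k - z k)%Z) -> F z' = F z.
Proof.
move=> H; have -> : z' = vadd z (vsub z' z).
  apply/ffunP => k; rewrite !ffunE; ring.
apply: (@per_dvd_aux d) => [k hk|k]; last by rewrite ffunE.
have := ltn_ord k; lia.
Qed.
End Per.

Section Tor.
Variable d n : nat.
Definition tor (z : site d) : {ffun 'I_d -> 'I_n.+1} :=
  [ffun k => inord (absz (z k %% n.+1%:Z)%Z)].

Lemma lift_tor z k : Defs.lift (tor z) k = (z k %% n.+1%:Z)%Z.
Proof.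
rewrite !ffunE inordK; first by rewrite gez0_abs // modz_ge0.
have h1 := ltz_pmod (z k) (isT : (0 < n.+1%:Z)).
have h2 := modz_ge0 (z k) (isT : (n.+1%:Z != 0)).
rewrite -ltz_nat gez0_abs //.
Qed.

Lemma tor_cong (z z' : site d) : (forall k, (z k = z' k %[mod n.+1%:Z])%Z) -> tor z = tor z'.
Proof. by move=> H; apply/ffunP => k; rewrite !ffunE H. Qed.

Lemma tor_lift x : tor (Defs.lift x) = x.
Proof.
apply/ffunP => k; apply: val_inj; rewrite ffunE /= ffunE modz_small.
  by rewrite /= inordK.
by apply/andP; split => //; rewrite ltz_nat.
Qed.

Lemma sum_translate (V : nmodType) (F : site d -> V) (v : site d) :
  (forall (x : site d) (k : 'I_d), F (vadd x (escale (n.+1%:Z) k)) = F x) ->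
  \sum_(x : {ffun 'I_d -> 'I_n.+1}) F (vadd (Defs.lift x) v) =
  \sum_(x : {ffun 'I_d -> 'I_n.+1}) F (Defs.lift x).
Proof.
move=> HF.
pose h (x : {ffun 'I_d -> 'I_n.+1}) := tor (vadd (Defs.lift x) v).
have hinj : injective h.
  move=> x1 x2 E.
  rewrite -(tor_lift x1) -(tor_lift x2).
  have E' : forall k, Defs.lift (h x1) k = Defs.lift (h x2) k by move=> k; rewrite E.
  apply: tor_cong => k; have := E' k; rewrite !lift_tor !ffunE => H.
  by apply/eqP; rewrite -(eqz_modDr (v k)); apply/eqP.
rewrite [RHS](reindex_inj hinj); apply: eq_bigr => x _.
apply: (@per_cong d n.+1 V F HF) => k.
rewrite -eqz_mod_dvd /h lift_tor !ffunE; apply/eqP; by rewrite modz_mod.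
Qed.
End Tor.

Section Key.
Variable d : nat.
Variable a : 'I_d.
Variable X : seq (site d).
Hypothesis Hu : uniq X.
Hypothesis Ho : pairwise (fun u v : site d => v a <= u a) X.
Variable eta : site d -> bool.

Definition gfun (j : nat) (y : site d) : int :=
  (all (fun w => ~~ eta (vadd y w)) (Aset a X j) : nat)%:Z.

Lemma vaddA (x y z : site d) : vadd x (vadd y z) = vadd (vadd x y) z.
Proof. by apply/ffunP => k; rewrite !ffunE addrA. Qed.

Lemma key i (z : site d) : (i < size X)%N ->
  (empty_except eta (map (fun y => vadd (vsub z (nth 0 X i)) y) (Aset a X i)) z : nat)%:Z
   * ((eta z : nat)%:Z - (eta (vadd z (ebasis a)) : nat)%:Z)
  = gfun i.+1 (vsub z (nth 0 X i)) - gfun i (vsub z (nth 0 X i)).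
Proof.
move=> hi.
set p := nth 0 X i; set y := vsub z p; set e := ebasis a.
set M := map (fun w => vadd w e) (take i X); set D := drop i.+1 X.
have hX : X = take i X ++ p :: D by rewrite -drop_nth // cat_take_drop.
have hAi : Aset a X i = M ++ p :: D by rewrite /Aset -drop_nth.
have hAi1 : Aset a X i.+1 = M ++ vadd p e :: D.
  by rewrite /Aset (take_nth 0 hi) map_rcons cat_rcons.
have hz : z = vadd y p by apply/ffunP => k; rewrite !ffunE; ring.
have pD : p \notin D.
  have := drop_uniq i Hu; rewrite (drop_nth 0 hi) /= => /andP[].
  by [].
have pM : p \notin M.
  apply/mapP => -[w wi pw].
  move: Ho; rewrite {1}hX pairwise_cat allrel_consr => /and3P[/andP[/allP H _] _ _].
  have := H w wi; rewrite /= pw !ffunE eqxx /=; lia.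
have yinj : forall w, (vadd y w == z) = (w == p).
  move=> w; rewrite hz; apply/eqP/eqP => [E|->] //.
  apply/ffunP => k; move/ffunP: E => /(_ k); rewrite !ffunE; exact: addrI.
have Eeq : empty_except eta (map (fun w => vadd y w) (Aset a X i)) z =
   all (fun w => ~~ eta (vadd y w)) M && all (fun w => ~~ eta (vadd y w)) D.
  rewrite /empty_except all_map hAi all_cat /= yinj eqxx /=.
  congr andb; [| ]; apply: eq_in_all => w wi /=; rewrite yinj;
    (case: (eqVneq w p) => [E|//]; move: wi; rewrite E).
    by rewrite (negbTE pM).
  by rewrite (negbTE pD).
have ez : eta z = eta (vadd y p) by rewrite -hz.
have eze : eta (vadd z e) = eta (vadd y (vadd p e)) by rewrite vaddA -hz.
rewrite Eeq ez eze /gfun hAi hAi1 !all_cat /=.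
case: (all _ M); case: (all _ D); case: (eta (vadd y p)); case: (eta (vadd y (vadd p e))) => //=.
Qed.
End Key.

Lemma count_sum (T : Type) (P : pred T) s :
  (count P s)%:Z = \sum_(i <- s) (P i : nat)%:Z.
Proof. elim: s => [|x s IH]; first by rewrite big_nil. by rewrite big_cons /= PoszD IH. Qed.

Lemma gfun_per d (a : 'I_d) (X : seq (site d)) (eta : site d -> bool) (L j : nat) :
  periodic L eta ->
  forall (y : site d) (k : 'I_d), @gfun d a X eta j (vadd y (escale L%:Z k)) = @gfun d a X eta j y.
Proof.
move=> He y k; rewrite /gfun; congr (Posz (nat_of_bool _)); apply: eq_all => w.
have -> : vadd (vadd y (escale L k)) w = vadd (vadd y w) (escale L k).
  by apply/ffunP => i; rewrite !ffunE; ring.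
by rewrite He.
Qed.

Theorem main_aux (d : nat) (a : 'I_d) (X : seq (site d))
  (Hu : uniq X) (Ho : pairwise (fun u v : site d => v a <= u a) X)
  (n : nat) (eta : site d -> bool) (He : periodic n.+1 eta) :
  current n.+1 a X eta = 0.
Proof.
pose S j := \sum_(x : {ffun 'I_d -> 'I_n.+1}) @gfun d a X eta j (Defs.lift x).
have Str : forall j (v : site d),
   \sum_(x : {ffun 'I_d -> 'I_n.+1}) @gfun d a X eta j (vadd (Defs.lift x) v) = S j.
  move=> j v; apply: sum_translate => y k; exact: gfun_per.
rewrite /current.
transitivity (\sum_(x : {ffun 'I_d -> 'I_n.+1}) \sum_(0 <= i < size X)
   (@gfun d a X eta i.+1 (vsub (Defs.lift x) (nth 0 X i)) -
    @gfun d a X eta i (vsub (Defs.lift x) (nth 0 X i)))).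
  apply: eq_bigr => x _; rewrite /caux count_sum mulr_suml /index_iota subn0.
  apply: eq_big_seq => i; rewrite mem_iota add0n => /andP[_ hi].
  exact: key.
rewrite exchange_big /=.
transitivity (\sum_(0 <= i < size X) (S i.+1 - S i)).
  apply: eq_bigr => i _; rewrite sumrB.
  have hv : forall j, \sum_(x : {ffun 'I_d -> 'I_n.+1})
      @gfun d a X eta j (vsub (Defs.lift x) (nth 0 X i)) = S j.
    move=> j; rewrite -(Str j [ffun k => - (nth 0 X i) k]); apply: eq_bigr => x _.
    by congr gfun; apply/ffunP => k; rewrite !ffunE.
  by rewrite !hv.
rewrite telescope_sumr // -(Str 0%N (ebasis a)) /S; apply/eqP; rewrite subr_eq0; apply/eqP.
apply: eq_bigr => x _; rewrite /gfun /Aset take_size drop_size cats0 take0 drop0 /=.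
rewrite all_map; do 2 f_equal; apply: eq_all => w /=.
suff -> : vadd w (ebasis a) = vadd (ebasis a) w by rewrite vaddA.
by apply/ffunP => k; rewrite !ffunE addrC.
Qed.

Theorem mainTheorem6 (d : nat) (A : 'I_d -> seq (site d))
  (Hdistinct : forall a : 'I_d, uniq (A a))
  (Hordered : forall a : 'I_d, pairwise (fun u v : site d => v a <= u a) (A a)) :
  exists L0 : nat, forall L : nat, (L0 <= L)%N ->
    forall eta : site d -> bool, periodic L eta ->
    forall a : 'I_d, current L a (A a) eta = 0.
Proof.
exists 1%N => -[|n] // _ eta He a.
exact: main_aux.
Qed.
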